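(* Let $\mathcal{P}$ be a polyomino, $\mathbb{K}$ a field, $S=\mathbb{K}[x_v \mid v\in V(\mathcal{P})]$ standard graded, $I_{\mathcal{P}}\subset S$ the polyomino ideal and $J_{\mathcal{P}}\subset S$ the toric ideal of $\mathcal{P}$ (both defined in the context). Then $I_{\mathcal{P}}=(J_{\mathcal{P}})_2$, i.e. $I_{\mathcal{P}}$ is the ideal generated by the homogeneous component of degree $2$ of $J_{\mathcal{P}}$; equivalently, the minimal generators of $I_{\mathcal{P}}$ are exactly the minimal generators of degree $2$ of $J_{\mathcal{P}}$.
   Context: For $a\in\mathbb{N}^2$ the cell $[a,a+(1,1)]$ has vertices $a,a+(1,0),a+(0,1),a+(1,1)$ and the four obvious edges. A polyomino $\mathcal{P}$ is a finite nonempty set of cells such that any two cells $C,D\in\mathcal{P}$ are joined by a sequence $C=C_1,\dots,C_m=D$ of cells of $\mathcal{P}$ with $C_i\cap C_{i+1}$ an edge of $C_i$. $V(\mathcal{P})$ is the union of the vertex sets of its cells. For $a=(i,j)$, $b=(k,\ell)$ with $i<k$, $j<\ell$, the interval $[a,b]=\{(p,q)\in\mathbb{N}^2: i\le p\le k,\ j\le q\le \ell\}$ is a proper interval; $a,b$ are its diagonal corners and $c=(i,\ell)$, $d=(k,j)$ its anti-diagonal corners. It is an inner interval of $\mathcal{P}$ if all cells contained in $[a,b]$ belong to $\mathcal{P}$. The polyomino ideal $I_{\mathcal{P}}$ is generated by all inner 2-minors $x_ax_b-x_cx_d$, $[a,b]$ an inner interval of $\mathcal{P}$ with anti-diagonal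 corners $c,d$. Toric ideal: a hole of $\mathcal{P}$ is a finite nonempty set $\mathcal{H}$ of cells of $\mathbb{N}^2$ not in $\mathcal{P}$, any two of which are connected by a path of cells in $\mathcal{H}$ (consecutive cells sharing an edge), and maximal with these properties. Order $\mathbb{N}^2$ by $(a_1,a_2)<(b_1,b_2)$ iff $a_1<b_1$, or $a_1=b_1$ and $a_2<b_2$; the lower left corner of a hole is the minimum of its vertices. Let $\mathcal{H}_1,\dots,\mathcal{H}_r$ be the holes of $\mathcal{P}$ with lower left corners $e_k=(i_k,j_k)$, and $\mathcal{F}_k=\{(i,j)\in V(\mathcal{P}): i\le i_k,\ j\le j_k\}$. A horizontal edge interval of $\mathcal{P}$ is a set $\{(t,j): i\le t\le k\}$ such that $\{(t,j),(t+1,j)\}$ is an edge of a cell of $\mathcal{P}$ for $t=i,\dots,k-1$; it is maximal if not strictly contained in another one; vertical edge intervals are defined analogously. Each vertex $a\in V(\mathcal{P})$ lies in a unique maximal horizontal edge interval $H(a)$ and a unique maximal vertical edge interval $V(a)$. Take variables $h_H$ for each maximal horizontal edge interval $H$, $v_V$ for each maximal vertical edge interval $V$, and $w_1,\dots,w_r$, and define $\varphi:S\to\mathbb{K}[h_H,v_V,w_k]$ by $\varphi(x_a)=h_{H(a)}v_{V(a)}\prod_{k:\,a\in\mathcal{F}_k}w_k$. The toric ideal is $J_{\mathcal{P}}=\ker\varphi$. *)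

(* Defs.v *)
From HB Require Import structures.
From mathcomp Require Import all_boot all_order all_algebra.
From mathcomp Require Import mpoly.
Set Implicit Arguments.
Unset Strict Implicit.
Unset Printing Implicit Defensive.
Import GRing.Theory.
Local Open Scope ring_scope.

(* A cell [a, a+(1,1)] is represented by its lower left corner a. *)
Definition cell := (nat * nat)%type.

Definition cell_vertices (c : cell) : seq (nat * nat) :=
  [:: c; (c.1.+1, c.2); (c.1, c.2.+1); (c.1.+1, c.2.+1)].

Definition verts (C : seq cell) : seq (nat * nat) :=
  flatten (map cell_vertices C).

Definition adjcell (c d : cell) : bool :=
  ((c.1 == d.1) && ((c.2.+1 == d.2) || (d.2.+1 == c.2))) ||
  ((c.2 == d.2) && ((c.1.+1 == d.1) || (d.1.+1 == c.1))).

Definition cells_connected (C : seq cell) : Prop :=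
  forall c d, c \in C -> d \in C ->
    exists p : seq cell, [/\ path adjcell c p, last c p = d & all (mem C) p].

Definition is_polyomino (P : seq cell) : Prop :=
  P != [::] /\ cells_connected P.

(* V(P), enumerated without repetition; the variable x_i of S corresponds to
   the vertex nth (0,0) (VP P) i. *)
Definition VP (P : seq cell) : seq (nat * nat) := undup (verts P).
Definition vtx (P : seq cell) (i : nat) : nat * nat := nth (0%N, 0%N) (VP P) i.

Definition Sring (K : fieldType) (P : seq cell) := {mpoly K[size (VP P)]}.

Definition inner_interval (P : seq cell) (a b : nat * nat) : Prop :=
  (a.1 < b.1)%N /\ (a.2 < b.2)%N /\
  forall c : cell, (a.1 <= c.1 < b.1)%N -> (a.2 <= c.2 < b.2)%N -> c \in P.

Definition inner_minor (K : fieldType) (P : seq cell) (f : Sring K P) : Prop :=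
  exists i j k l : 'I_(size (VP P)),
    [/\ inner_interval P (vtx P i) (vtx P j),
        vtx P k = ((vtx P i).1, (vtx P j).2),
        vtx P l = ((vtx P j).1, (vtx P i).2) &
        f = 'X_i * 'X_j - 'X_k * 'X_l].

Definition ideal_gen (n : nat) (K : fieldType) (G : {mpoly K[n]} -> Prop)
  (f : {mpoly K[n]}) : Prop :=
  exists (m : nat) (c g : 'I_m -> {mpoly K[n]}),
    (forall t, G (g t)) /\ f = \sum_(t < m) c t * g t.

Definition polyomino_ideal (K : fieldType) (P : seq cell) : Sring K P -> Prop :=
  ideal_gen (@inner_minor K P).

Definition is_hole (P : seq cell) (H : seq cell) : Prop :=
  [/\ H != [::], (forall c, c \in H -> c \notin P), cells_connected H &
      forall H' : seq cell, (forall c, c \in H' -> c \notin P) ->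
        cells_connected H' -> {subset H <= H'} -> {subset H' <= H}].

Definition holes_enum (P : seq cell) (hs : seq (seq cell)) : Prop :=
  [/\ (forall H, H \in hs -> is_hole P H),
      (forall H, is_hole P H -> exists2 H', H' \in hs & H =i H') &
      (forall i j, (i < size hs)%N -> (j < size hs)%N ->
         nth [::] hs i =i nth [::] hs j -> i = j)].

Definition lexle (a b : nat * nat) : bool :=
  (a.1 < b.1)%N || ((a.1 == b.1) && (a.2 <= b.2)%N).
Definition lexmin (a b : nat * nat) := if lexle a b then a else b.
Definition lower_left (H : seq cell) : nat * nat :=
  let vs := verts H in foldr lexmin (head (0%N, 0%N) vs) vs.

Definition inF (H : seq cell) (a : nat * nat) : bool :=
  ((a.1 <= (lower_left H).1) && (a.2 <= (lower_left H).2))%N.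

(* {(t,j),(t+1,j)} is an edge of a cell of P *)
Definition hedge (P : seq cell) (t j : nat) : bool :=
  ((t, j) \in P) || ((0 < j)%N && ((t, j.-1) \in P)).
(* {(i,t),(i,t+1)} is an edge of a cell of P *)
Definition vedge (P : seq cell) (i t : nat) : bool :=
  ((i, t) \in P) || ((0 < i)%N && ((i.-1, t) \in P)).

(* Left endpoint of the maximal horizontal edge interval H(a) containing a;
   a maximal horizontal edge interval is determined by its left endpoint. *)
Fixpoint hleft_x (P : seq cell) (j i : nat) : nat :=
  if i is i'.+1 then (if hedge P i' j then hleft_x P j i' else i) else 0%N.
Definition hleft (P : seq cell) (a : nat * nat) : nat * nat :=
  (hleft_x P a.2 a.1, a.2).
(* Bottom endpoint of the maximal vertical edge interval V(a). *)
Fixpoint vbot_y (P : seq cell) (i t : nat) : nat :=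
  if t is t'.+1 then (if vedge P i t' then vbot_y P i t' else t) else 0%N.
Definition vbot (P : seq cell) (a : nat * nat) : nat * nat :=
  (a.1, vbot_y P a.1 a.2).

Definition HI (P : seq cell) := undup (map (hleft P) (VP P)).
Definition VI (P : seq cell) := undup (map (vbot P) (VP P)).

(* Number of variables of the target ring K[h_H, v_V, w_k]:
   variables 0 .. |HI|-1 are the h_H, then the v_V, then w_1..w_r. *)
Definition ntor (P : seq cell) (hs : seq (seq cell)) : nat :=
  (size (HI P) + size (VI P) + size hs)%N.

Definition phi_exp (P : seq cell) (hs : seq (seq cell)) (a : nat * nat)
  (j : nat) : nat :=
  if (j < size (HI P))%N then nat_of_bool (nth (0%N, 0%N) (HI P) j == hleft P a)
  else if (j < size (HI P) + size (VI P))%N then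
    nat_of_bool (nth (0%N, 0%N) (VI P) (j - size (HI P)) == vbot P a)
  else nat_of_bool (inF (nth [::] hs (j - size (HI P) - size (VI P))) a).

(* phi(x_a) = h_{H(a)} v_{V(a)} prod_{k : a in F_k} w_k *)
Definition phi_var (K : fieldType) (P : seq cell) (hs : seq (seq cell))
  (i : 'I_(size (VP P))) : {mpoly K[ntor P hs]} :=
  'X_[ [multinom phi_exp P hs (vtx P i) j | j < ntor P hs] ].

Definition phi (K : fieldType) (P : seq cell) (hs : seq (seq cell))
  (f : Sring K P) : {mpoly K[ntor P hs]} :=
  mmap (fun c : K => c%:MP) (@phi_var K P hs) f.

Definition toric_ideal (K : fieldType) (P : seq cell) (hs : seq (seq cell))
  (f : Sring K P) : Prop := phi hs f = 0.

Definition toric_deg2 (K : fieldType) (P : seq cell) (hs : seq (seq cell))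
  (f : Sring K P) : Prop := toric_ideal hs f /\ f \is 2.-homog.

(* Main.v *)
Require Import Defs.
From HB Require Import structures.
From mathcomp Require Import all_boot all_order all_algebra.
From mathcomp Require Import mpoly.
From mathcomp Require Import zify.
From Stdlib Require Import ClassicalEpsilon Classical.
Set Implicit Arguments.
Unset Strict Implicit.
Unset Printing Implicit Defensive.
Import GRing.Theory.

Lemma lexle_refl a : lexle a a.
Proof. by rewrite /lexle eqxx leqnn orbT. Qed.

Lemma lexle_trans a b c : lexle a b -> lexle b c -> lexle a c.
Proof.
rewrite /lexle; case: a b c => [a1 a2] [b1 b2] [c1 c2] /=.
move=> /orP[h1|/andP[/eqP e1 h1]] /orP[h2|/andP[/eqP e2 h2]]; apply/orP.
- by left; lia.
- by left; lia.
- by left; lia.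
- by right; apply/andP; split; [apply/eqP; lia| lia].
Qed.

Lemma lexle_total a b : lexle a b || lexle b a.
Proof.
rewrite /lexle; case: a b => [a1 a2] [b1 b2] /=.
lia.
Qed.

Lemma lexle_anti a b : lexle a b -> lexle b a -> a = b.
Proof.
rewrite /lexle; case: a b => [a1 a2] [b1 b2] /=.
move=> /orP[h1|/andP[/eqP e1 h1]] /orP[h2|/andP[/eqP e2 h2]]; try lia.
by congr pair; lia.
Qed.

Lemma foldr_lexmin (s : seq (nat * nat)) x0 :
  let m := foldr lexmin x0 s in
  [/\ m = x0 \/ m \in s, lexle m x0 & forall v, v \in s -> lexle m v].
Proof.
elim: s => [|y s [IH1 IH2 IH3]] /=.
  by split=> //; [left | apply: lexle_refl].
rewrite /lexmin; set m := foldr _ _ _.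
case: ifP => hy.
  split; first by right; rewrite mem_head.
  - exact: lexle_trans hy IH2.
  - move=> v; rewrite in_cons => /orP[/eqP->|/IH3 hv]; first exact: lexle_refl.
    exact: lexle_trans hy hv.
have hmy : lexle m y by move: (lexle_total y m); rewrite hy.
split => //.
  by case: IH1 => [h|h]; [left|right; rewrite in_cons h orbT].
move=> v; rewrite in_cons => /orP[/eqP->|/IH3 //]; done.
Qed.

Lemma verts_nil H : H != [::] -> verts H != [::].
Proof. by case: H. Qed.

Lemma in_verts H v : (v \in verts H) = has (fun c => v \in cell_vertices c) H.
Proof.
by apply/flatten_mapP/hasP => -[c hc hv]; exists c.
Qed.

Lemma ll_spec H : H != [::] ->
  lower_left H \in verts H /\ forall v, v \in verts H -> lexle (lower_left H) v.
Proof.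
move=> hH; rewrite /lower_left /=.
have := foldr_lexmin (verts H) (head (0,0)%N (verts H)).
case=> h1 h2 h3; split => //.
case: h1 => [->|//].
by case: (verts H) (verts_nil hH) => [|x s] //= _; rewrite mem_head.
Qed.

Lemma cell_vert_ge c v : v \in cell_vertices c -> lexle c v.
Proof.
case: c => [c1 c2]; rewrite /cell_vertices /lexle !in_cons in_nil orbF /=.
move=> /or4P[] /eqP -> /=; lia.
Qed.

Lemma ll_cell H : H != [::] -> lower_left H \in H.
Proof.
move=> hH; case: (ll_spec hH) => h1 h2.
move: h1; rewrite in_verts => /hasP [c hc hv].
have hcv : c \in verts H by rewrite in_verts; apply/hasP; exists c => //; rewrite /cell_vertices mem_head.
by rewrite (lexle_anti (h2 _ hcv) (cell_vert_ge hv)).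
Qed.

Lemma ll_eq H H' : H != [::] -> H =i H' -> lower_left H = lower_left H'.
Proof.
move=> hH eH.
have hH' : H' != [::].
  case: H hH eH => [|c H] // _ eH; case: H' eH => // /(_ c); by rewrite mem_head.
have ev : verts H =i verts H'.
  move=> v; rewrite !in_verts; apply/hasP/hasP => [][c hc hv]; exists c => //;
  by rewrite ?eH // -eH.
case: (ll_spec hH) => a1 a2; case: (ll_spec hH') => b1 b2.
apply: lexle_anti; [apply: a2; rewrite ev // | apply: b2; rewrite -ev //].
Qed.
Lemma adjcellC a b : adjcell a b = adjcell b a.
Proof.
rewrite /adjcell; case: a b => [a1 a2] [b1 b2] /=.
by rewrite (eq_sym a1) (eq_sym a2) (orbC (a2.+1 == b2)) (orbC (a1.+1 == b1)).
Qed.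

Section Hole.
Variables (P : seq cell) (x0 y0 x1 y1 : nat).
Hypothesis hb : forall t, (x0 <= t < x1)%N -> hedge P t y0.
Hypothesis ht : forall t, (x0 <= t < x1)%N -> hedge P t y1.
Hypothesis hl : forall t, (y0 <= t < y1)%N -> vedge P x0 t.
Hypothesis hr : forall t, (y0 <= t < y1)%N -> vedge P x1 t.

Definition inside (u : cell) := ((x0 <= u.1 < x1) && (y0 <= u.2 < y1))%N.

Lemma step_inside u v : inside u -> u \notin P -> v \notin P -> adjcell u v -> inside v.
Proof.
case: u => [u1 u2]; case: v => [v1 v2]; rewrite /inside /adjcell /=.
move=> /andP[/andP[hx0 hx1] /andP[hy0 hy1]] hu hv.
case/orP => /andP[/eqP e /orP[/eqP e2|/eqP e2]]; subst.
- case: (ltnP u2.+1 y1) => h; first by lia.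
  have eq : u2.+1 = y1 by lia.
  move: (ht (t := v1)); rewrite /hedge -eq /= (negbTE hv) (negbTE hu) /=; lia.
- case: (leqP y0 v2) => h; first by lia.
  have eq : v2.+1 = y0 by lia.
  move: (hb (t := v1)); rewrite /hedge -eq /= (negbTE hv) (negbTE hu) /=; lia.
- case: (ltnP u1.+1 x1) => h; first by lia.
  have eq : u1.+1 = x1 by lia.
  move: (hr (t := v2)); rewrite /vedge -eq /= (negbTE hv) (negbTE hu) /=; lia.
- case: (leqP x0 v1) => h; first by lia.
  have eq : v1.+1 = x0 by lia.
  move: (hl (t := v2)); rewrite /vedge -eq /= (negbTE hv) (negbTE hu) /=; lia.
Qed.

Lemma path_inside p x : inside x -> x \notin P -> path adjcell x p ->
  all (fun y => y \notin P) p -> inside (last x p).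
Proof.
elim: p x => [|y p IH] x //= hx hxP /andP[hxy hp] /andP[hy hall].
exact: IH (step_inside hx hxP hy hxy) hy hp hall.
Qed.

Variable c0 : cell.
Hypothesis c0in : inside c0.
Hypothesis c0P : c0 \notin P.

Definition reach x := exists p, [/\ path adjcell c0 p, last c0 p = x &
  all (fun y => y \notin P) p].

Lemma reach_inside x : reach x -> inside x.
Proof. by case=> p [h1 <- h3]; exact: path_inside. Qed.

Lemma reach_notP x : reach x -> x \notin P.
Proof.
case=> p [h1 <- h3]; have := mem_last c0 p; rewrite in_cons => /orP[/eqP->//|].
by move/(allP h3).
Qed.

Lemma reach_all p x : reach x -> path adjcell x p ->
  all (fun y => y \notin P) p -> forall y, y \in p -> reach y.
Proof.
elim: p x => [|z p IH] x //= hx /andP[hxz hp] /andP[hz hall].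
have rz : reach z.
  case: hx => q [h1 h2 h3]; exists (rcons q z); split.
  - by rewrite rcons_path h1 h2.
  - by rewrite last_rcons.
  - by rewrite all_rcons hz h3.
move=> y; rewrite in_cons => /orP[/eqP->//|]; exact: IH rz hp hall y.
Qed.

Definition Rl := allpairs (fun a b => (a,b)) (iota x0 (x1-x0)) (iota y0 (y1-y0)).

Lemma mem_Rl u : inside u -> u \in Rl.
Proof.
case: u => [u1 u2]; rewrite /inside /= => /andP[h1 h2].
apply/allpairsP; exists (u1, u2); rewrite !mem_iota /=; split => //; lia.
Qed.

Definition reachb x := if excluded_middle_informative (reach x) then true else false.

Lemma reachbP x : reachb x <-> reach x.
Proof. by rewrite /reachb; case: excluded_middle_informative. Qed.

Definition Hl := [seq x <- Rl | reachb x].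

Lemma mem_Hl x : x \in Hl <-> reach x.
Proof.
rewrite /Hl mem_filter; split; first by case/andP => /reachbP.
by move=> h; rewrite (mem_Rl (reach_inside h)) andbT; apply/reachbP.
Qed.

Lemma reach_c0 : reach c0.
Proof. by exists [::]. Qed.

Lemma last_rev_belast (x : cell) p : last (last x p) (rev (belast x p)) = x.
Proof.
elim/last_ind: p => [|p z _] //=.
by rewrite belast_rcons last_rcons rev_cons last_rcons.
Qed.

Lemma Hl_connected : cells_connected Hl.
Proof.
move=> c d /mem_Hl [p1 [h11 h12 h13]] /mem_Hl [p2 [h21 h22 h23]].
have r1 := reach_all reach_c0 h11 h13.
have r2 := reach_all reach_c0 h21 h23.
exists (rev (belast c0 p1) ++ p2); split.
- rewrite cat_path -h12 last_rev_belast h21 andbT rev_path.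
  by rewrite (@eq_path _ _ adjcell) // => a b; rewrite adjcellC.
- by rewrite last_cat -h12 last_rev_belast.
- apply/allP => y; rewrite mem_cat mem_rev => /orP[/mem_belast|hy].
  + by rewrite in_cons => /orP[/eqP->|/r1 h]; apply/mem_Hl => //; exact: reach_c0.
  + by apply/mem_Hl; exact: r2.
Qed.

Lemma Hl_hole : is_hole P Hl.
Proof.
split.
- have : c0 \in Hl by apply/mem_Hl/reach_c0.
  by case: Hl.
- by move=> c /mem_Hl /reach_notP.
- exact: Hl_connected.
- move=> H' hP hc sub x hx.
  have c0H : c0 \in H' by apply/sub/mem_Hl/reach_c0.
  case: (hc c0 x c0H hx) => p [h1 h2 h3].
  apply/mem_Hl; exists p; split => //.
  by apply/allP => y /(allP h3) /hP.
Qed.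

End Hole.

Lemma rect_inner P hs x0 y0 x1 y1 :
  holes_enum P hs -> (x0 < x1)%N -> (y0 < y1)%N ->
  (forall t, (x0 <= t < x1)%N -> hedge P t y0) ->
  (forall t, (x0 <= t < x1)%N -> hedge P t y1) ->
  (forall t, (y0 <= t < y1)%N -> vedge P x0 t) ->
  (forall t, (y0 <= t < y1)%N -> vedge P x1 t) ->
  (forall H, H \in hs -> (inF H (x0,y0) + inF H (x1,y1) = inF H (x0,y1) + inF H (x1,y0))%N) ->
  inner_interval P (x0,y0) (x1,y1).
Proof.
move=> [_ hen _] hx hy hb ht hl hr hw; split => //; split => // c hc1 hc2.
case: (boolP (c \in P)) => // hcP; exfalso.
have cin : inside x0 y0 x1 y1 c by rewrite /inside hc1 hc2.
have hole := Hl_hole hb ht hl hr cin hcP.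
case: (hen _ hole) => H' H'in eH.
have ne : Hl P x0 y0 x1 y1 c != [::] by case: hole.
have e_in := ll_cell ne.
have := reach_inside hb ht hl hr cin hcP (proj1 (mem_Hl hb ht hl hr cin hcP _) e_in).
move: (hw _ H'in); rewrite /inF -(ll_eq ne eH).
case: (lower_left _) => e1 e2 /=; rewrite /inside /=; lia.
Qed.


Lemma pair4 (T : eqType) (a b c d : T) :
  (forall x, x \in [:: a; b; c; d] -> ((x == a) + (x == b) = (x == c) + (x == d))%N) ->
  (a = c /\ b = d) \/ (a = d /\ b = c).
Proof.
move=> H.
have Ha := H a; have Hb := H b; rewrite !inE !eqxx ?orbT /= in Ha Hb.
have {Ha} Ha := Ha isT; have {Hb} Hb := Hb isT.
case: (a =P c) Ha Hb => [->|ac] /=.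
  case: (b =P d) => [->|bd]; first by left.
  by rewrite (eq_sym b c); case: (c =P b) => [->|] /=; rewrite ?eqxx; lia.
case: (a =P d) => [->|ad] /=; last by lia.
case: (b =P c) => [->|bc] /=; first by right.
by rewrite (eq_sym b d); case: (d =P b) => [->|] /=; rewrite ?eqxx; lia.
Qed.

Section HL.
Variable P : seq cell.

Lemma hl_le j i : (hleft_x P j i <= i)%N.
Proof. elim: i => [|i IH] //=; case: ifP => _ //; lia. Qed.

Lemma hl_gt j i t : (t < i)%N -> ~~ hedge P t j -> (t < hleft_x P j i)%N.
Proof.
elim: i => [|i IH] // hti hn /=; case: ifP => he //.
have : t != i by apply/eqP => e; subst; rewrite he in hn.
move=> hne; apply: IH => //; lia.
Qed.

Lemma hl_edges j a b : (a <= b)%N -> hleft_x P j a = hleft_x P j b ->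
  forall t, (a <= t < b)%N -> hedge P t j.
Proof.
move=> hab he t /andP[h1 h2]; apply/negPn/negP => hn.
have := hl_gt h2 hn; have := hl_le j a; lia.
Qed.

Lemma hl_const j a b : (a <= b)%N -> (forall t, (a <= t < b)%N -> hedge P t j) ->
  hleft_x P j a = hleft_x P j b.
Proof.
elim: b => [|b IH] hab he; first by have -> : a = 0%N by lia.
case: (ltnP a b.+1) => h; last by have -> : a = b.+1 by lia.
rewrite /= he; last by lia.
apply: IH; first by lia.
move=> t ht; apply: he; lia.
Qed.

Lemma vb_le i t : (vbot_y P i t <= t)%N.
Proof. elim: t => [|t IH] //=; case: ifP => _ //; lia. Qed.

Lemma vb_gt i s t : (s < t)%N -> ~~ vedge P i s -> (s < vbot_y P i t)%N.
Proof.
elim: t => [|t IH] // hti hn /=; case: ifP => he //.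
have : s != t by apply/eqP => e; subst; rewrite he in hn.
move=> hne; apply: IH => //; lia.
Qed.

Lemma vb_edges i a b : (a <= b)%N -> vbot_y P i a = vbot_y P i b ->
  forall t, (a <= t < b)%N -> vedge P i t.
Proof.
move=> hab he t /andP[h1 h2]; apply/negPn/negP => hn.
have := vb_gt h2 hn; have := vb_le i a; lia.
Qed.

Lemma vb_const i a b : (a <= b)%N -> (forall t, (a <= t < b)%N -> vedge P i t) ->
  vbot_y P i a = vbot_y P i b.
Proof.
elim: b => [|b IH] hab he; first by have -> : a = 0%N by lia.
case: (ltnP a b.+1) => h; last by have -> : a = b.+1 by lia.
rewrite /= he; last by lia.
apply: IH; first by lia.
move=> t ht; apply: he; lia.
Qed.
End HL.


Lemma exp_pairs P hs a b c d :
  a \in VP P -> b \in VP P -> c \in VP P -> d \in VP P ->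
  (forall t, (t < ntor P hs)%N ->
     (phi_exp P hs a t + phi_exp P hs b t = phi_exp P hs c t + phi_exp P hs d t)%N) ->
  [/\ (hleft P a = hleft P c /\ hleft P b = hleft P d) \/
      (hleft P a = hleft P d /\ hleft P b = hleft P c),
      (vbot P a = vbot P c /\ vbot P b = vbot P d) \/
      (vbot P a = vbot P d /\ vbot P b = vbot P c) &
      forall H, H \in hs -> (inF H a + inF H b = inF H c + inF H d)%N].
Proof.
move=> ha hb hc hd E; split.
- apply: pair4 => x hx.
  have xin : x \in HI P.
    rewrite /HI mem_undup; move: hx; rewrite !inE.
    by case/or4P => /eqP ->; apply: map_f.
  have hi : (index x (HI P) < size (HI P))%N by rewrite index_mem.
  have := E (index x (HI P)); rewrite /phi_exp hi nth_index //.
  by move=> -> //; rewrite /ntor; lia.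
- apply: pair4 => x hx.
  have xin : x \in VI P.
    rewrite /VI mem_undup; move: hx; rewrite !inE.
    by case/or4P => /eqP ->; apply: map_f.
  have hi : (index x (VI P) < size (VI P))%N by rewrite index_mem.
  have := E (size (HI P) + index x (VI P)).
  have h1 : (size (HI P) + index x (VI P) < size (HI P))%N = false by lia.
  have h2 : (size (HI P) + index x (VI P) < size (HI P) + size (VI P))%N = true by lia.
  rewrite /phi_exp !h1 !h2 addKn nth_index //.
  by move=> -> //; rewrite /ntor; lia.
- move=> H hH.
  have hi : (index H hs < size hs)%N by rewrite index_mem.
  have := E (size (HI P) + size (VI P) + index H hs).
  have h1 : (size (HI P) + size (VI P) + index H hs < size (HI P))%N = false by lia.
  have h2 : (size (HI P) + size (VI P) + index H hs < size (HI P) + size (VI P))%N = false by lia.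
  rewrite /phi_exp !h1 !h2 -addnA addKn addKn nth_index //.
  by move=> -> //; rewrite /ntor; lia.
Qed.

Import GRing.Theory.
Local Open Scope ring_scope.

Section Iseq.
Variables (n : nat) (K : fieldType) (G : {mpoly K[n]} -> Prop).

Definition Iseq (f : {mpoly K[n]}) := exists s : seq ({mpoly K[n]} * {mpoly K[n]}),
  (forall x, x \in s -> G x.2) /\ f = \sum_(x <- s) x.1 * x.2.

Lemma ideal_genE f : ideal_gen G f <-> Iseq f.
Proof.
split.
- rewrite /ideal_gen; case=> m [c [g [hg ->]]].
  exists [seq (c t, g t) | t <- enum 'I_m]; split.
    by move=> x /mapP [t _ ->]; exact: hg.
  by rewrite big_map big_enum.
- case=> s [hs ->].
  exists (size s), (fun t => (nth (0,0) s t).1), (fun t => (nth (0,0) s t).2).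
  split; first by move=> t; apply: hs; apply: mem_nth.
  by rewrite (big_nth (0,0)) big_mkord.
Qed.

Lemma Iseq0 : Iseq 0.
Proof. by exists [::]; split => //; rewrite big_nil. Qed.

Lemma IseqG g : G g -> Iseq g.
Proof.
by move=> h; exists [:: (1, g)]; split; [move=> x; rewrite inE => /eqP-> | rewrite big_seq1 mul1r].
Qed.

Lemma IseqMD a f g : Iseq f -> Iseq g -> Iseq (a * f + g).
Proof.
case=> s [hs ->] [t [ht ->]].
exists ([seq (a * x.1, x.2) | x <- s] ++ t); split.
  move=> x; rewrite mem_cat => /orP[/mapP [y hy ->]|hx]; [exact: (hs y hy)|exact: (ht x hx)].
rewrite big_cat big_map mulr_sumr; congr (_ + _); apply: eq_bigr => x _.
by rewrite mulrA.
Qed.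

Lemma IseqN f : Iseq f -> Iseq (- f).
Proof. by move=> h; rewrite -[- f]addr0 -mulN1r; apply: IseqMD => //; exact: Iseq0. Qed.

Lemma Iseq_sum (I : Type) (r : seq I) (F : I -> {mpoly K[n]}) :
  (forall i, Iseq (F i)) -> Iseq (\sum_(i <- r) F i).
Proof.
move=> h; elim: r => [|i r IH]; first by rewrite big_nil; exact: Iseq0.
by rewrite big_cons -[F i]mul1r; apply: IseqMD.
Qed.
End Iseq.

Lemma vtx_in P (i : 'I_(size (VP P))) : vtx P i \in VP P.
Proof. exact: mem_nth. Qed.

Lemma vtx_inj P (i k : 'I_(size (VP P))) : vtx P i = vtx P k -> i = k.
Proof.
move=> e; apply: val_inj => /=; apply/eqP.
by rewrite -(nth_uniq (0,0)%N (ltn_ord i) (ltn_ord k) (undup_uniq _)); apply/eqP.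
Qed.

Lemma core1 K P hs (i j k l : 'I_(size (VP P))) : holes_enum P hs ->
  ((vtx P i).1 <= (vtx P j).1)%N ->
  hleft P (vtx P i) = hleft P (vtx P k) -> hleft P (vtx P j) = hleft P (vtx P l) ->
  vbot P (vtx P i) = vbot P (vtx P l) -> vbot P (vtx P j) = vbot P (vtx P k) ->
  (forall H, H \in hs -> (inF H (vtx P i) + inF H (vtx P j) =
                          inF H (vtx P k) + inF H (vtx P l))%N) ->
  polyomino_ideal ('X_i * 'X_j - 'X_k * 'X_l : Sring K P).
Proof.
move=> hen hle Hac Hbd Vad Vbc W; rewrite /polyomino_ideal ideal_genE.
move: hle Hac Hbd Vad Vbc W.
case ea : (vtx P i) => [a1 a2]; case eb : (vtx P j) => [b1 b2].
case ec : (vtx P k) => [c1 c2]; case ed : (vtx P l) => [d1 d2] /=.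
rewrite /hleft /vbot /= => hle [Hac e1] [Hbd e2] [e3 Vad] [e4 Vbc] W.
subst c2 d2 d1 c1.
case: (ltnP a1 b1) => h1; last first.
  have e : a1 = b1 by lia. subst b1.
  have -> : k = i by apply: vtx_inj; rewrite ea ec.
  have -> : l = j by apply: vtx_inj; rewrite eb ed.
  by rewrite subrr; exact: Iseq0.
case: (ltngtP a2 b2) => h2.
-
  apply: IseqG; exists i, j, l, k; split.
  + rewrite ea eb; apply: (rect_inner hen) => //=.
    * by apply: hl_edges => //; lia.
    * by apply: (hl_edges _ (esym Hbd)); lia.
    * by apply: vb_edges => //; lia.
    * by apply: (vb_edges _ (esym Vbc)); lia.
    * by move=> H /W; rewrite addnC => ->; rewrite addnC.
  + by rewrite ed ea eb.
  + by rewrite ec ea eb.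
  + by rewrite [_ * 'X_k]mulrC.
-
  rewrite -[_ - _]opprB; apply: IseqN; apply: IseqG; exists l, k, i, j; split.
  + rewrite ed ec; apply: (rect_inner hen) => //=.
    * by apply: (hl_edges _ (esym Hbd)); lia.
    * by apply: hl_edges => //; lia.
    * by apply: (vb_edges _ (esym Vad)); lia.
    * by apply: vb_edges => //; lia.
    * by move=> H /W hw; rewrite addnC -hw.
  + by rewrite ea ed ec.
  + by rewrite eb ed ec.
  + by rewrite [_ * 'X_k]mulrC [_ * 'X_j]mulrC.
- subst b2.
  have -> : k = j by apply: vtx_inj; rewrite eb ec.
  have -> : l = i by apply: vtx_inj; rewrite ea ed.
  by rewrite mulrC subrr; exact: Iseq0.
Qed.


Section Gen.
Variables (n N : nat) (K : fieldType) (h : 'I_n -> {mpoly K[N]}).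
Hypothesis hmon : forall m, exists t, mmap1 h m = 'X_[t].
Variable I : {mpoly K[n]} -> Prop.
Hypothesis I0 : I 0.
Hypothesis IMD : forall a p q, I p -> I q -> I (a * p + q).
Variable D : 'X_{1..n} -> Prop.
Hypothesis Hfib : forall m m', D m -> D m' -> mmap1 h m = mmap1 h m' -> I ('X_[m] - 'X_[m']).

Let phi0 (f : {mpoly K[n]}) := mmap (fun c : K => c%:MP) h f.

Lemma phi0X m : phi0 'X_[m] = mmap1 h m.
Proof. exact: mmapX. Qed.

Lemma mX_inj (s t : 'X_{1..N}) : 'X_[s] = 'X_[t] :> {mpoly K[N]} -> s = t.
Proof.
move=> e; have := congr1 (mcoeff t) e; rewrite !mcoeffX eqxx.
by case: eqP => // _ /eqP; rewrite eq_sym oner_eq0.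
Qed.

Lemma gen_aux s : forall f, (size (msupp f) <= s)%N ->
  (forall m, m \in msupp f -> D m) -> phi0 f = 0 -> I f.
Proof.
elim: s => [|s IH] f hs hD hphi.
  by move: hs; rewrite leqn0 size_eq0 => /eqP /msuppnil0 ->.
case ef : (msupp f) => [|m rest].
  by rewrite (msuppnil0 ef).
have mf : m \in msupp f by rewrite ef mem_head.
have fm0 : f@_m != 0 by rewrite -mcoeff_msupp.
case: (boolP (has (fun m' => (m' != m) && (mmap1 h m' == mmap1 h m)) (msupp f))).
  case/hasP => m' m'f /andP [ne /eqP em].
  set f' := f - f@_m *: ('X_[m] - 'X_[m']).
  have ef' : f = (f@_m)%:MP * ('X_[m] - 'X_[m']) + f'.
    by rewrite /f' mul_mpolyC addrC subrK.
  have sub : {subset msupp f' <= rem m (msupp f)}.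
    move=> x; rewrite mcoeff_msupp /f' mcoeffB mcoeffZ mcoeffB !mcoeffX.
    rewrite (mem_rem_uniq m (msupp_uniq f)) inE.
    case: (eqVneq m x) => [<-|mx].
      by rewrite (negbTE ne) subr0 mulr1 subrr eqxx.
    case: (eqVneq m' x) => [<-|m'x].
      by rewrite m'f.
    by rewrite subrr mulr0 subr0 -mcoeff_msupp.
  rewrite ef'; apply: IMD.
    by apply: Hfib; [apply: hD | apply: hD | rewrite em].
  apply: IH.
  - have := uniq_leq_size (msupp_uniq f') sub.
    rewrite size_rem // ; move: hs; rewrite ef /=; lia.
  - by move=> x /sub /mem_rem /hD.
  - rewrite /phi0 /f' raddfB /= mmapZ raddfB /= !mmapX em subrr mulr0 subr0.
    exact: hphi.
move/hasPn => hn; exfalso.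
case: (hmon m) => t ht.
have : (phi0 f)@_t = f@_m.
  rewrite /phi0 /mmap (raddf_sum (mcoeff t)) (bigD1_seq m) ?msupp_uniq //=.
  rewrite mcoeffCM ht mcoeffX eqxx mulr1 big_seq_cond big1 ?addr0 //.
  move=> x /andP [xf xm]; rewrite mcoeffCM.
  case: (hmon x) => u hs'; rewrite hs' mcoeffX.
  case: (eqVneq u t) => [est|]; last by rewrite mulr0.
  have := hn x xf; rewrite xm hs' ht est eqxx //.
by rewrite hphi mcoeff0 => /esym /eqP; rewrite (negbTE fm0).
Qed.

Lemma gen f : (forall m, m \in msupp f -> D m) -> phi0 f = 0 -> I f.
Proof. exact: (@gen_aux (size (msupp f))). Qed.
End Gen.


Lemma mdeg2 n (m : 'X_{1..n}) : mdeg m = 2%N -> exists i j, m = (U_(i) + U_(j))%MM.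
Proof.
move=> hm.
have : [exists i, m i != 0%N].
  case: (boolP [exists i, m i != 0%N]) => //; rewrite negb_exists => /forallP h0.
  move: hm; rewrite mdegE big1 // => i _; exact/eqP/negPn/h0.
case/existsP => i hi.
have le : (U_(i) <= m)%MM.
  apply/mnm_lepP => j; rewrite mnm1E; case: eqP => // <-; lia.
have := submK le; set m' := (m - U_(i))%MM => em.
have : mdeg m' == 1%N by move: hm; rewrite -em mdegD mdeg1; lia.
case/mdeg1P => j /eqP ej.
by exists j, i; rewrite -em ej.
Qed.

Section Main.
Variables (K : fieldType) (P : seq cell) (hs : seq (seq cell)).
Hypothesis hen : holes_enum P hs.

Definition Em (i : 'I_(size (VP P))) : 'X_{1..ntor P hs} :=
  [multinom phi_exp P hs (vtx P i) j | j < ntor P hs].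

Lemma phi_varE i : phi_var K hs i = 'X_[Em i].
Proof. by []. Qed.

Lemma hmon m : exists t, mmap1 (@phi_var K P hs) m = 'X_[t].
Proof.
rewrite /mmap1; elim/big_rec: _ => [|i x _ [t ->]].
  by exists 0%MM; rewrite mpolyX0.
by exists (Em i *+ m i + t)%MM; rewrite phi_varE mpolyXn mpolyXD.
Qed.

Lemma mmap1UU i j : mmap1 (@phi_var K P hs) (U_(i) + U_(j))%MM = 'X_[Em i + Em j].
Proof.
rewrite commr_mmap1_M; last by move=> ? ?; apply: mulrC.
by rewrite !mmap1U !phi_varE mpolyXD.
Qed.

Lemma fiber (i j k l : 'I_(size (VP P))) :
  (forall t, (t < ntor P hs)%N ->
     (phi_exp P hs (vtx P i) t + phi_exp P hs (vtx P j) t =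
      phi_exp P hs (vtx P k) t + phi_exp P hs (vtx P l) t)%N) ->
  polyomino_ideal ('X_i * 'X_j - 'X_k * 'X_l : Sring K P).
Proof.
move=> E.
case: (exp_pairs (vtx_in i) (vtx_in j) (vtx_in k) (vtx_in l) E) => HH VV W.
have vq a c : hleft P a = hleft P c -> vbot P a = vbot P c -> a = c.
  by case: a c => [a1 a2] [c1 c2]; rewrite /hleft /vbot /= => -[_ ->] [-> _].
have core2 (i' j' k' l' : 'I_(size (VP P))) :
  hleft P (vtx P i') = hleft P (vtx P k') -> hleft P (vtx P j') = hleft P (vtx P l') ->
  vbot P (vtx P i') = vbot P (vtx P l') -> vbot P (vtx P j') = vbot P (vtx P k') ->
  (forall H, H \in hs -> (inF H (vtx P i') + inF H (vtx P j') =
                          inF H (vtx P k') + inF H (vtx P l'))%N) ->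
  polyomino_ideal ('X_i' * 'X_j' - 'X_k' * 'X_l' : Sring K P).
  move=> h1 h2 h3 h4 w.
  case: (leqP (vtx P i').1 (vtx P j').1) => hle; first exact: (@core1 K P hs i' j' k' l' hen).
  rewrite [_ * 'X_j']mulrC [_ * 'X_l']mulrC.
  apply: (@core1 K P hs j' i' l' k' hen) => //.
    exact: ltnW hle.
  by move=> H /w hw; rewrite addnC hw addnC.
case: HH => [[h1 h2]|[h1 h2]]; case: VV => [[v1 v2]|[v1 v2]].
- have -> : k = i by apply: vtx_inj; rewrite (vq _ _ h1 v1).
  have -> : l = j by apply: vtx_inj; rewrite (vq _ _ h2 v2).
  by rewrite subrr /polyomino_ideal ideal_genE; exact: Iseq0.
- exact: core2.
- rewrite [_ * 'X_l]mulrC; apply: core2 => //.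
  by move=> H /W ->; rewrite addnC.
- have -> : l = i by apply: vtx_inj; rewrite (vq _ _ h1 v1).
  have -> : k = j by apply: vtx_inj; rewrite (vq _ _ h2 v2).
  by rewrite mulrC subrr /polyomino_ideal ideal_genE; exact: Iseq0.
Qed.

End Main.


Section Fin.
Variables (K : fieldType) (P : seq cell) (hs : seq (seq cell)).
Hypothesis hen : holes_enum P hs.

Lemma inner_exp a b : inner_interval P a b -> forall t, (t < ntor P hs)%N ->
  (phi_exp P hs a t + phi_exp P hs b t =
   phi_exp P hs (a.1, b.2) t + phi_exp P hs (b.1, a.2) t)%N.
Proof.
case: a b => [a1 a2] [b1 b2] [/= h1 [h2 hin]] t ht.
have ha : hleft P (a1,a2) = hleft P (b1,a2).
  rewrite /hleft /=; congr pair; apply: hl_const; first lia.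
  by move=> s hs'; rewrite /hedge hin //=; lia.
have hb : hleft P (b1,b2) = hleft P (a1,b2).
  rewrite /hleft /=; congr pair; symmetry; apply: hl_const; first lia.
  move=> s hs'; rewrite /hedge; apply/orP; right; apply/andP; split; first lia.
  apply: hin => /=; lia.
have va : vbot P (a1,a2) = vbot P (a1,b2).
  rewrite /vbot /=; congr pair; apply: vb_const; first lia.
  by move=> s hs'; rewrite /vedge hin //=; lia.
have vb : vbot P (b1,b2) = vbot P (b1,a2).
  rewrite /vbot /=; congr pair; symmetry; apply: vb_const; first lia.
  move=> s hs'; rewrite /vedge; apply/orP; right; apply/andP; split; first lia.
  apply: hin => /=; lia.
rewrite /phi_exp; case: ifP => h4.
  by rewrite ha hb addnC.
case: ifP => h3.
  by rewrite va vb.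
have hk : (t - size (HI P) - size (VI P) < size hs)%N by move: ht h3; rewrite /ntor; lia.
set H := nth [::] hs _.
have hH : is_hole P H by case: hen => h _ _; apply: h; apply: mem_nth.
have ne : H != [::] by case: hH.
have eH := ll_cell ne.
have eP : lower_left H \notin P by case: hH => _ h _ _; exact: h.
have nin : ~ ((a1 <= (lower_left H).1 < b1) && (a2 <= (lower_left H).2 < b2))%N.
  move=> /andP [c1 c2]; by rewrite hin in eP.
move: nin; rewrite /inF /=; case: (lower_left H) => e1 e2 /=.
case: (leqP a1 e1); case: (leqP a2 e2); case: (leqP b1 e1); case: (leqP b2 e2);
  move=> /= *; lia.
Qed.

Lemma phiX (i : 'I_(size (VP P))) : phi hs ('X_i : Sring K P) = phi_var K hs i.
Proof. by rewrite /phi mmapX mmap1U. Qed.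

Lemma minor_toric g : inner_minor g -> @toric_deg2 K P hs g.
Proof.
case=> i [j [k [l [hin ek el ->]]]]; split.
  rewrite /toric_ideal /phi raddfB /= !rmorphM /= -!/(phi hs _) !phiX !phi_varE -!mpolyXD.
  suff -> : (Em hs i + Em hs j = Em hs k + Em hs l)%MM by rewrite subrr.
  apply/mnmP => t; rewrite !mnmDE !mnmE ek el; exact: inner_exp.
have h2 (a b : 'I_(size (VP P))) : ('X_a * 'X_b : Sring K P) \is 2.-homog.
  by rewrite -mpolyXD dhomogX /= mdegD !mdeg1.
by apply: dhomogD; [exact: h2 | rewrite dhomogN; exact: h2].
Qed.

Lemma toric_minor f : @toric_deg2 K P hs f -> polyomino_ideal f.
Proof.
case=> hphi hdeg; rewrite /polyomino_ideal ideal_genE.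
apply: (@gen _ _ K (@phi_var K P hs) (@hmon K P hs) _ (@Iseq0 _ _ _) _
          (fun m => mdeg m = 2%N)) => //.
- by move=> a p q hp hq; apply: IseqMD.
- move=> m m' /mdeg2 [i [j ->]] /mdeg2 [k [l ->]].
  rewrite !mmap1UU => /mX_inj e.
  rewrite !mpolyXD -ideal_genE; apply: (fiber _ hen) => t ht.
  have := congr1 (fun m : 'X_{1..ntor P hs} => m (Ordinal ht)) e; rewrite /= !mnmDE !mnmE; exact.
- by move=> m hm; apply: (dhomog_mf hdeg).
Qed.

End Fin.

Lemma Iseq_sum_in n (K : fieldType) (G : {mpoly K[n]} -> Prop) (I : eqType) (r : seq I) F :
  (forall i, i \in r -> Iseq G (F i)) -> Iseq G (\sum_(i <- r) F i).
Proof.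
elim: r => [|i r IH] h; first by rewrite big_nil; exact: Iseq0.
rewrite big_cons -[F i]mul1r; apply: IseqMD; first by apply: h; rewrite mem_head.
by apply: IH => x hx; apply: h; rewrite in_cons hx orbT.
Qed.

Theorem lemma3p1 (K : fieldType) (P : seq cell) (hs : seq (seq cell)) :
  is_polyomino P -> holes_enum P hs ->
  forall f : Sring K P,
    polyomino_ideal f <-> ideal_gen (@toric_deg2 K P hs) f.
Proof.
move=> _ hen f; split.
- rewrite /polyomino_ideal /ideal_gen => -[m [c [g [hg ->]]]].
  exists m, c, g; split => // t; exact: (minor_toric hen (hg t)).
- rewrite ideal_genE /polyomino_ideal ideal_genE => -[s [hs' ->]].
  apply: Iseq_sum_in => x hx; rewrite -[_ * _]addr0; apply: IseqMD; last exact: Iseq0.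
  rewrite -ideal_genE; exact: (toric_minor hen (hs' x hx)).
Qed.
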